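(* Let $K_1,K_2,t$ be positive integers with $K_2<t<K_1K_2$, let $N\ge K_1K_2$, and let $M_1,M_2$ satisfy $$\frac{M_1}{N}=\frac{\binom{K_1K_2-K_2}{t-K_2}}{\binom{K_1K_2}{t}},\qquad \frac{M_2}{N}=\frac{t}{K_1K_2}-\frac{\binom{K_1K_2-K_2}{t-K_2}}{\binom{K_1K_2}{t}}.$$ Then the optimal first-layer load under uncoded placement of the $(K_1,K_2;M_1,M_2;N)$ hierarchical caching system is $$R_1^*=\frac{K_1K_2\left(1-\frac{M_1+M_2}{N}\right)}{K_1K_2\frac{M_1+M_2}{N}+1}=\frac{K_1K_2-t}{t+1}.$$
   Context: Notation: $[a]=\{1,\ldots,a\}$. Hierarchical caching model $(K_1,K_2;M_1,M_2;N)$. A server stores $N$ independent files $W_1,\ldots,W_N$, each uniformly distributed on $B$ bits. There are $K_1$ mirror sites, each with a cache of $M_1B$ bits, and $K_1K_2$ users $U_{k_1,k_2}$ ($k_1\in[K_1]$, $k_2\in[K_2]$), each with a cache of $M_2B$ bits; user $U_{k_1,k_2}$ is attached to mirror site $k_1$. The server reaches all mirror sites through one error-free broadcast link; mirror site $k_1$ reaches its $K_2$ attached users through an error-free broadcast link. A scheme with uncoded placement: in the placement phase (without knowledge of demands) each mirror site $k_1$ stores a subset $\mathcal{Z}_{k_1}$ of the bits of the files, of size at most $M_1B$ bits, and each user $U_{k_1,k_2}$ stores a subset $\mathcal{Z}_{(k_1,k_2)}$ of the bits of the files, of size at most $M_2B$ bits. In the delivery phase, given a demand vector $\mathbf{d}=(d_{k_1,k_2})\in[N]^{K_1K_2}$,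 the server broadcasts to the mirror sites a message $X$ (a function of the files and $\mathbf{d}$) of length $L(\mathbf{d})$ bits; each mirror site $k_1$ broadcasts to its attached users a message $X_{k_1}$ that is a function of $X$, $\mathcal{Z}_{k_1}$ and $\mathbf{d}$; each user $U_{k_1,k_2}$ must recover $W_{d_{k_1,k_2}}$ from $X_{k_1}$, $\mathcal{Z}_{(k_1,k_2)}$ and $\mathbf{d}$. The first-layer load is $R_1=\max_{\mathbf{d}\in[N]^{K_1K_2}}L(\mathbf{d})/B$. The optimal first-layer load under uncoded placement $R_1^*$ is the infimum of $R_1$ over all file sizes $B$ and all such schemes with uncoded placement in which every user decodes correctly. *)

(* Defs.v *)
From HB Require Import structures.
From mathcomp Require Import all_boot all_order all_algebra.
From mathcomp Require Import boolp classical_sets reals.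
Set Implicit Arguments. Unset Strict Implicit. Unset Printing Implicit Defensive.
Import Order.TTheory GRing.Theory Num.Theory.
Local Open Scope ring_scope.
Local Open Scope classical_set_scope.

(* A realisation of the N files W_1..W_N of B bits each: bit (n, b) of the
   library.  Files are indexed by 'I_N (= [N] shifted by one), bits by 'I_B. *)
Definition files (N B : nat) := {ffun 'I_N * 'I_B -> bool}.

Definition demand (K1 K2 N : nat) := {ffun 'I_K1 * 'I_K2 -> 'I_N}.

Definition depends_only_on (N B : nat) (T : Type) (Z : {set 'I_N * 'I_B})
  (f : files N B -> T) : Prop :=
  forall w w' : files N B, (forall p, p \in Z -> w p = w' p) -> f w = f w'.

(* A (zero-error) hierarchical caching scheme with uncoded placement for the
   (K1,K2;M1,M2;N) system, with file size B, achieving first-layer load r: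
   - Z1 k1       : bits stored at mirror k1 (at most M1*B bits),
   - Z2 k1 k2    : bits stored at user U_{k1,k2} (at most M2*B bits),
   - X d w       : server broadcast, of length L d bits,
   - Y d k1 x w  : mirror k1's broadcast, a function of x = X, of its cache
                   content (depends only on bits in Z1 k1) and of d,
   - D d k1 k2 y w : decoder of U_{k1,k2}, a function of y = X_{k1}, of its
                   cache content (bits in Z2 k1 k2) and of d,
   and r = max_d L(d) / B. *)
Definition achievable_load {R : realType} (K1 K2 N : nat) (M1 M2 : R)
    (r : R) : Prop :=
  exists B : nat, (0 < B)%N /\
  exists (Z1 : 'I_K1 -> {set 'I_N * 'I_B})
         (Z2 : 'I_K1 -> 'I_K2 -> {set 'I_N * 'I_B})
         (L : demand K1 K2 N -> nat)
         (X : demand K1 K2 N -> files N B -> seq bool)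
         (Y : demand K1 K2 N -> 'I_K1 -> seq bool -> files N B -> seq bool)
         (D : demand K1 K2 N -> 'I_K1 -> 'I_K2 -> seq bool -> files N B ->
                {ffun 'I_B -> bool}),
       (forall k1, (#|Z1 k1|%:R : R) <= M1 * B%:R) /\
        (forall k1 k2, (#|Z2 k1 k2|%:R : R) <= M2 * B%:R) /\
        (forall d w, size (X d w) = L d) /\
        (forall d k1 x, depends_only_on (Z1 k1) (Y d k1 x)) /\
        (forall d k1 k2 y, depends_only_on (Z2 k1 k2) (D d k1 k2 y)) /\
        (forall d w k1 k2,
            D d k1 k2 (Y d k1 (X d w) w) w = [ffun b => w (d (k1, k2), b)]) /\
        r = (\max_(d : demand K1 K2 N) L d)%N%:R / B%:R.

Definition R1_star {R : realType} (K1 K2 N : nat) (M1 M2 : R) : R :=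
  inf [set r : R | achievable_load K1 K2 N M1 M2 r].

(* Main.v *)
Require Import Defs.
From HB Require Import structures.
From mathcomp Require Import all_boot all_order all_algebra all_fingroup.
From mathcomp Require Import boolp classical_sets reals.
From mathcomp Require Import zify ring lra.
Set Implicit Arguments. Unset Strict Implicit. Unset Printing Implicit Defensive.
Import Order.TTheory GRing.Theory Num.Theory.

Section Genie.
Variables (K1 K2 N B : nat).
Notation U := ('I_K1 * 'I_K2)%type.
Variables (Z1 : 'I_K1 -> {set 'I_N * 'I_B})
         (Z2 : 'I_K1 -> 'I_K2 -> {set 'I_N * 'I_B})
         (L : demand K1 K2 N -> nat)
         (X : demand K1 K2 N -> files N B -> seq bool)
         (Y : demand K1 K2 N -> 'I_K1 -> seq bool -> files N B -> seq bool)
         (D : demand K1 K2 N -> 'I_K1 -> 'I_K2 -> seq bool -> files N B ->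
                {ffun 'I_B -> bool}).
Hypothesis hX : forall d w, size (X d w) = L d.
Hypothesis hY : forall d k1 x, depends_only_on (Z1 k1) (Y d k1 x).
Hypothesis hD : forall d k1 k2 y, depends_only_on (Z2 k1 k2) (D d k1 k2 y).
Hypothesis hC : forall d w k1 k2,
            D d k1 k2 (Y d k1 (X d w) w) w = [ffun b => w (d (k1, k2), b)].

Definition CC (u : U) := Z1 u.1 :|: Z2 u.1 u.2.

Definition Gset (d : demand K1 K2 N) (rho : U -> nat) : {set 'I_N * 'I_B} :=
  [set p | [exists v, (p.1 == d v) && [exists u in [set u | p \in CC u], rho u <= rho v]]].

Lemma genie (d : demand K1 K2 N) (rho : U -> nat) :
  injective d -> injective rho ->
  (K1 * K2 * B <= L d + #|Gset d rho|)%N.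
Proof.
move=> dinj rinj.
set G := Gset d rho.
pose g (f : {ffun U * 'I_B -> bool}) : files N B :=
  [ffun p => if [pick v | d v == p.1] is Some v then f (v, p.2) else false].
have gE f v b : g f (d v, b) = f (v, b).
  rewrite ffunE /=; case: pickP => [v' /eqP /dinj -> // | /(_ v)]; by rewrite eqxx.
have gN f n b : ~~ [exists v, d v == n] -> g f (n, b) = false.
  move=> /existsPn Hn; rewrite ffunE /=; case: pickP => [v' Hv|//].
  by have := Hn v'; rewrite Hv.
pose n := (L d + #|G|)%N.
pose sq (w : files N B) := X d w ++ [seq w p | p <- enum G].
have szsq w : size (sq w) = n by rewrite size_cat hX size_map -cardE.
pose psi (w : files N B) : {ffun 'I_n -> bool} := [ffun i : 'I_n => nth false (sq w) i].
have inj : injective (fun f => psi (g f)).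
  move=> f f' H.
  set w := g f; set w' := g f'.
  have Hs : sq w = sq w'.
    apply: (eq_from_nth (x0 := false)); first by rewrite !szsq.
    move=> i; rewrite szsq => Hi.
    by have := congr1 (fun h : {ffun 'I_n -> bool} => h (Ordinal Hi)) H; rewrite /psi !ffunE.
  move: Hs; rewrite /sq => /eqP; rewrite eqseq_cat ?hX // => /andP [/eqP HX /eqP HG].
  have gw : forall p, p \in G -> w p = w' p.
    by move=> p pG; move/eq_in_map: HG; apply; rewrite mem_enum.
  have claim : forall k v, (rho v < k)%N -> forall b, w (d v, b) = w' (d v, b).
    elim=> [//|k IH] [k1 k2] Hv.
    have agree : forall p, p \in CC (k1, k2) -> w p = w' p.
      move=> [m b] Hp.
      case: (boolP [exists v, d v == m]) => [/existsP [v' /eqP dv']|Hn]; last first.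
        by rewrite /w /w' !gN.
      subst m.
      case: (ltnP (rho v') (rho (k1, k2))) => Hlt.
        by apply: IH; apply: leq_trans Hlt _.
      apply: gw; rewrite inE; apply/existsP; exists v'; rewrite eqxx /=.
      apply/exists_inP; exists (k1, k2) => //; rewrite inE; exact: Hp.
    have := hC d w k1 k2; have := hC d w' k1 k2.
    rewrite HX (@hY d k1 (X d w') w w'); last first.
      by move=> p Hp; apply: agree; rewrite /CC inE Hp.
    rewrite (@hD d k1 k2 _ w w'); last first.
      by move=> p Hp; apply: agree; rewrite /CC inE Hp orbT.
    move=> -> /ffunP E b; have := E b; rewrite !ffunE => ->. done.
  apply/ffunP => -[v b].
  by rewrite -!gE; apply: (claim (rho v).+1).
have := @leq_card _ _ _ inj.
rewrite !card_ffun card_bool !card_prod !card_ord leq_exp2l //.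
Qed.
End Genie.


Lemma card_sum (T : finType) (P : pred T) : #|[set x | P x]| = \sum_x (P x : nat).
Proof.
rewrite -sum1_card big_mkcond; apply: eq_bigr => x _; rewrite inE; by case: (P x).
Qed.

Section Perms.
Variables (U : finType) (r : U -> nat).
Hypothesis rinj : injective r.

Definition ismin (p : {perm U}) x (A : {set U}) := [forall u in A, r (p x) <= r (p u)].

Lemma ismin_swap p x y (A : {set U}) : x \in A -> y \in A -> ismin p x A ->
  ismin (tperm x y * p)%g y A.
Proof.
rewrite /ismin => xA yA /forall_inP H; apply/forall_inP => u uA.
rewrite !permM tpermR; apply: H.
by case: tpermP.
Qed.

Lemma card_ismin_le x y (A : {set U}) : x \in A -> y \in A ->
  #|[set p | ismin p x A]| <= #|[set p | ismin p y A]|.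
Proof.
move=> xA yA.
rewrite -(card_imset _ (@mulgI _ (tperm x y))).
apply: subset_leq_card; apply/fintype.subsetP => q /imsetP [p Hp ->]; move: Hp; rewrite !inE => Hp.
by rewrite ismin_swap.
Qed.

Lemma card_ismin_eq x y (A : {set U}) : x \in A -> y \in A ->
  #|[set p | ismin p x A]| = #|[set p | ismin p y A]|.
Proof. by move=> xA yA; apply/eqP; rewrite eqn_leq !card_ismin_le. Qed.

Lemma sum_ismin_one p (A : {set U}) x0 : x0 \in A -> \sum_(x in A) (ismin p x A : nat) = 1.
Proof.
move=> x0A.
case: (@arg_minnP _ x0 (mem A) (fun x => r (p x)) x0A) => m mA Hm.
rewrite (bigD1 m) //= big1.
  have -> : ismin p m A by apply/forall_inP.
  by [].
move=> x /andP [xA xm].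
case Hx: (ismin p x A) => //.
move/forall_inP: Hx => /(_ m mA) H1.
have H2 := Hm x xA.
have : r (p x) = r (p m) by apply/eqP; rewrite eqn_leq H1 H2.
by move/rinj/perm_inj => E; rewrite E eqxx in xm.
Qed.

Lemma sum_ismin (A : {set U}) x0 : x0 \in A -> \sum_(x in A) #|[set p | ismin p x A]| = #|{perm U}|.
Proof.
move=> x0A.
under eq_bigr do rewrite card_sum.
rewrite exchange_big /= -sum1_card; apply: eq_bigr => p _.
exact: sum_ismin_one x0A.
Qed.

Lemma card_ismin (A : {set U}) x : x \in A -> #|A| * #|[set p | ismin p x A]| = #|{perm U}|.
Proof.
move=> xA; rewrite -(sum_ismin xA) -sum_nat_const.
by apply: eq_bigr => y yA; apply: card_ismin_eq.
Qed.

Definition cntS (p : {perm U}) (S : {set U}) v := [exists u in S, r (p u) <= r (p v)].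

Lemma cntS_out p (S : {set U}) v : v \notin S -> cntS p S v = ~~ ismin p v (v |: S).
Proof.
move=> vS; apply/idP/idP.
  move=> /exists_inP [u uS Hu]; apply/negP => /forall_inP /(_ u).
  rewrite in_setU1 uS orbT => /(_ isT) H.
  have : r (p u) = r (p v) by apply/eqP; rewrite eqn_leq Hu H.
  by move/rinj/perm_inj => E; rewrite -E uS in vS.
move=> /forall_inPn [u]; rewrite in_setU1 => /orP [/eqP ->|uS]; first by rewrite leqnn.
by rewrite -ltnNge => H; apply/exists_inP; exists u => //; apply: ltnW.
Qed.

Lemma cnt_sum (S : {set U}) :
  (#|S| + 1) * (\sum_v \sum_p (cntS p S v : nat)) = #|{perm U}| * #|S| * (#|U| + 1).
Proof.
set P := #|{perm U}|.
rewrite (bigID (mem S)) /=.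
have E1 : \sum_(v | v \in S) \sum_p (cntS p S v : nat) = #|S| * P.
  rewrite -sum_nat_const; apply: eq_bigr => v vS.
  rewrite /P -sum1_card; apply: eq_bigr => p _.
  by have -> : cntS p S v by apply/exists_inP; exists v.
have E2 : forall v, v \notin S ->
  \sum_p (cntS p S v : nat) + #|[set p | ismin p v (v |: S)]| = P.
  move=> v vS; rewrite card_sum -big_split /= /P -sum1_card; apply: eq_bigr => p _.
  by rewrite cntS_out //; case: (ismin _ _ _).
have E3 : forall v, v \notin S -> (#|S| + 1) * #|[set p | ismin p v (v |: S)]| = P.
  move=> v vS; rewrite /P -(card_ismin (setU11 v S)) cardsU1 vS addnC //.
have E4 : \sum_(v | v \notin S) \sum_p (cntS p S v : nat) + 
          \sum_(v | v \notin S) #|[set p | ismin p v (v |: S)]| = #|~: S| * P.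
  rewrite -big_split /= -sum_nat_const; apply: eq_big => v; first by rewrite inE.
  by move=> vS; apply: E2.
have E5 : (#|S| + 1) * \sum_(v | v \notin S) #|[set p | ismin p v (v |: S)]| = #|~: S| * P.
  rewrite big_distrr /= -sum_nat_const; apply: eq_big => v; first by rewrite inE.
  by move=> vS; apply: E3.
have E6 := cardsC S.
rewrite E1.
move: E4 E5 E6.
set a := \sum_(v | v \notin S) _.
set b := \sum_(v | v \notin S) _.
move=> E4 E5 E6.
rewrite -E6.
nia.
Qed.
End Perms.


Lemma exists_le_sum (T : finType) (Q : pred T) : ([exists x, Q x] : nat) <= \sum_x (Q x : nat).
Proof.
case: existsP => [[x Qx]|_] //.
by rewrite (bigD1 x) //= Qx.
Qed.

Lemma card_sumS (T : finType) (A : {set T}) : #|A| = \sum_x (x \in A : nat).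
Proof. by rewrite -sum1_card big_mkcond; apply: eq_bigr => x _; case: (x \in A). Qed.

Lemma sum_eq1 (T : finType) (n : T) : \sum_c ((n == c) : nat) = 1.
Proof.
rewrite (bigD1 n) //= eqxx big1 // => c /negbTE; by rewrite eq_sym => ->.
Qed.

Definition rk (K1 K2 : nat) (u : 'I_K1 * 'I_K2) : nat := enum_rank u.

Lemma rk_inj K1 K2 : injective (@rk K1 K2).
Proof. by move=> u v /val_inj /enum_rank_inj. Qed.

Lemma rk_lt K1 K2 (u : 'I_K1 * 'I_K2) : rk u < K1 * K2.
Proof.
have E : #|{: 'I_K1 * 'I_K2}| = K1 * K2 by rewrite card_prod !card_ord.
rewrite /rk -E; exact: ltn_ord.
Qed.

Definition dc (K1 K2 N : nat) (N0 : 0 < N) (c : 'I_N) : demand K1 K2 N :=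
  [ffun v => Ordinal (ltn_pmod (c + rk v) N0)].

Lemma dc_inj K1 K2 N (N0 : 0 < N) (c : 'I_N) : K1 * K2 <= N -> injective (dc K1 K2 N0 c).
Proof.
move=> KN u v; rewrite !ffunE => /(congr1 val) /= /eqP.
rewrite eqn_modDl !modn_small; first by move/eqP/rk_inj.
- by apply: leq_trans (rk_lt v) KN.
- by apply: leq_trans (rk_lt u) KN.
Qed.

Lemma dc_count K1 K2 N (N0 : 0 < N) (v : 'I_K1 * 'I_K2) (n : 'I_N) :
  \sum_c ((n == dc K1 K2 N0 c v) : nat) = 1.
Proof.
have hinj : injective (fun c => dc K1 K2 N0 c v).
  move=> c c'; rewrite !ffunE => /(congr1 val) /= /eqP.
  by rewrite eqn_modDr !modn_small // => /eqP /val_inj.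
have := reindex_inj (op := addn) (x := 0) (P := xpredT) (F := fun c => ((n == c) : nat)) hinj.
by rewrite sum_eq1 => ->.
Qed.

Section ConvNat.
Variables (K1 K2 N B : nat).
Notation U := ('I_K1 * 'I_K2)%type.
Variables (Z1 : 'I_K1 -> {set 'I_N * 'I_B})
         (Z2 : 'I_K1 -> 'I_K2 -> {set 'I_N * 'I_B})
         (L : demand K1 K2 N -> nat)
         (X : demand K1 K2 N -> files N B -> seq bool)
         (Y : demand K1 K2 N -> 'I_K1 -> seq bool -> files N B -> seq bool)
         (D : demand K1 K2 N -> 'I_K1 -> 'I_K2 -> seq bool -> files N B ->
                {ffun 'I_B -> bool}).
Hypothesis hX : forall d w, size (X d w) = L d.
Hypothesis hY : forall d k1 x, depends_only_on (Z1 k1) (Y d k1 x).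
Hypothesis hD : forall d k1 k2 y, depends_only_on (Z2 k1 k2) (D d k1 k2 y).
Hypothesis hC : forall d w k1 k2,
            D d k1 k2 (Y d k1 (X d w) w) w = [ffun b => w (d (k1, k2), b)].
Hypothesis N0 : 0 < N.
Hypothesis KN : K1 * K2 <= N.

Definition Sp (p : 'I_N * 'I_B) : {set U} := [set u | p \in CC Z1 Z2 u].

Lemma card_G (d : demand K1 K2 N) (rho : U -> nat) :
  #|Gset Z1 Z2 d rho| <= \sum_p \sum_v ((p.1 == d v) && [exists u in Sp p, rho u <= rho v] : nat).
Proof.
rewrite card_sumS; apply: leq_sum => p _; rewrite inE.
exact: (exists_le_sum (fun v => (p.1 == d v) && [exists u in Sp p, rho u <= rho v])).
Qed.

Lemma step_perm (pi : {perm U}) :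
  N * (K1 * K2 * B) <= N * (\max_d L d) + \sum_p \sum_v (cntS (@rk K1 K2) pi (Sp p) v : nat).
Proof.
have H c : K1 * K2 * B <= \max_d L d +
    \sum_p \sum_v ((p.1 == dc K1 K2 N0 c v) && cntS (@rk K1 K2) pi (Sp p) v : nat).
  have := genie hX hY hD hC (@dc_inj K1 K2 N N0 c KN) (rho := fun u => rk (pi u))
     (fun u v E => perm_inj (rk_inj E)).
  move=> /leq_trans; apply.
  apply: leq_add; first exact: leq_bigmax.
  exact: card_G.
have : \sum_(c : 'I_N) (K1 * K2 * B) <= \sum_(c : 'I_N) (\max_d L d +
    \sum_p \sum_v ((p.1 == dc K1 K2 N0 c v) && cntS (@rk K1 K2) pi (Sp p) v : nat)).
  by apply: leq_sum => c _; exact: H.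
rewrite sum_nat_const card_ord big_split /= sum_nat_const card_ord.
move=> /leq_trans; apply; rewrite leq_add2l.
rewrite exchange_big /=; apply: leq_sum => p _.
rewrite exchange_big /=; apply: leq_sum => v _.
case: (cntS _ _ _ _).
  by under eq_bigr do rewrite andbT; rewrite dc_count.
by rewrite big1 // => c _; rewrite andbF.
Qed.

Lemma conv_nat :
  #|{perm U}| * (N * (K1 * K2 * B)) <=
  #|{perm U}| * (N * (\max_d L d)) +
    \sum_p \sum_v \sum_(pi : {perm U}) (cntS (@rk K1 K2) pi (Sp p) v : nat).
Proof.
have : \sum_(pi : {perm U}) (N * (K1 * K2 * B)) <= \sum_(pi : {perm U}) (N * (\max_d L d) + \sum_p \sum_v (cntS (@rk K1 K2) pi (Sp p) v : nat)).
  by apply: leq_sum => pi _; exact: step_perm.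
rewrite sum_nat_const big_split /= sum_nat_const cardE -cardE.
move=> /leq_trans; apply; rewrite leq_add2l.
rewrite exchange_big /=; apply: leq_sum => p _.
by rewrite exchange_big /=.
Qed.
End ConvNat.


Lemma card_sup (T : finType) (A : {set T}) m : #|A| <= m <= #|T| ->
 #|[set X : {set T} | (A \subset X) && (#|X| == m)]| = 'C(#|T| - #|A|, m - #|A|).
Proof.
move=> /andP [Am mT].
rewrite -(card_imset _ (@finset.setC_inj T)).
have -> : [set ~: X | X in [set X : {set T} | (A \subset X) && (#|X| == m)]]
         = [set Y : {set T} | Y \subset ~: A & #|Y| == #|T| - m].
  apply/setP => Y; rewrite inE; apply/imsetP/idP.
    move=> [X]; rewrite inE => /andP [AX /eqP Xm] ->.
    rewrite finset.setCS AX /=; have := cardsC X; rewrite Xm => <-. by rewrite addKn.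
  move=> /andP [YA /eqP Ym]; exists (~: Y); last by rewrite finset.setCK.
  rewrite inE -finset.setCS finset.setCK YA /=.
  have := cardsC Y; rewrite Ym => E. apply/eqP; lia.
rewrite cards_draws.
have := cardsC A => E.
have -> : #|~: A| = #|T| - #|A| by lia.
rewrite -bin_sub; last by lia.
congr 'C(_, _); lia.
Qed.


Lemma card_enum_val (T : finType) (A : {set T}) (Q : pred T) :
  #|[set i : 'I_#|A| | Q (enum_val i)]| = #|[set x in A | Q x]|.
Proof.
rewrite -(card_imset _ enum_val_inj); apply: eq_card => x.
apply/imsetP/idP.
  by move=> [i Hi ->]; move: Hi; rewrite !inE => Hi; rewrite enum_valP.
rewrite inE => /andP [xA Qx]; exists (enum_rank_in xA x); last by rewrite enum_rankK_in.
by rewrite inE enum_rankK_in.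
Qed.

Section Scheme.
Variables (K1 K2 t N : nat).
Notation U := ('I_K1 * 'I_K2)%type.
Definition Pt : {set {set U}} := [set T : {set U} | #|T| == t].
Definition Pt1 : {set {set U}} := [set T : {set U} | #|T| == t.+1].
Variables (x0 : {set U}) (x0P : x0 \in Pt).
Notation B := #|Pt|.

Definition Tb (b : 'I_B) : {set U} := enum_val b.
Definition grp (k1 : 'I_K1) : {set U} := [set u : U | u.1 == k1].
Definition Z1s k1 : {set 'I_N * 'I_B} := [set p | grp k1 \subset Tb p.2].
Definition Z2s k1 k2 : {set 'I_N * 'I_B} :=
  [set p | ((k1, k2) \in Tb p.2) && ~~ (grp k1 \subset Tb p.2)].
Definition idx (T : {set U}) : 'I_B := enum_rank_in x0P T.
Definition Xs (d : demand K1 K2 N) (w : files N B) : seq bool :=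
  [seq \big[addb/false]_(u in Q) w (d u, idx (Q :\ u)) | Q : {set U} <- enum Pt1].
Definition Ys (d : demand K1 K2 N) (k1 : 'I_K1) (x : seq bool) (w : files N B) :=
  x ++ [seq w p | p <- enum (Z1s k1)].
Definition vw k1 k2 (y : seq bool) (w : files N B) (p : 'I_N * 'I_B) : bool :=
  if p \in Z2s k1 k2 then w p else nth false (drop #|Pt1| y) (index p (enum (Z1s k1))).
Definition Dec (d : demand K1 K2 N) k1 k2 (y : seq bool) (v : 'I_N * 'I_B -> bool) :
   {ffun 'I_B -> bool} :=
  [ffun b => if (k1, k2) \in Tb b then v (d (k1, k2), b) else
     nth false y (index ((k1, k2) |: Tb b) (enum Pt1)) (+)
     \big[addb/false]_(u' in ((k1, k2) |: Tb b) :\ (k1, k2))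
         v (d u', idx (((k1, k2) |: Tb b) :\ u'))].
Definition Ds d k1 k2 y w := Dec d k1 k2 y (vw k1 k2 y w).

Lemma TbP b : #|Tb b| = t.
Proof. by have := enum_valP b; rewrite inE => /eqP. Qed.
Lemma TbK T : T \in Pt -> Tb (idx T) = T.
Proof. by move=> TP; rewrite /Tb /idx enum_rankK_in. Qed.
Lemma idxK b : idx (Tb b) = b.
Proof. by rewrite /Tb /idx enum_valK_in. Qed.

Lemma hXs d w : size (Xs d w) = #|Pt1|.
Proof. by rewrite size_map -cardE. Qed.

Lemma hYs d k1 x : depends_only_on (Z1s k1) (Ys d k1 x).
Proof.
move=> w w' H; rewrite /Ys; congr (_ ++ _); apply/eq_in_map => p.
by rewrite mem_enum => /H.
Qed.

Lemma hDs d k1 k2 y : depends_only_on (Z2s k1 k2) (Ds d k1 k2 y).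
Proof.
move=> w w' H; rewrite /Ds.
have -> : vw k1 k2 y w = vw k1 k2 y w'.
  apply: funext => p; rewrite /vw; case: ifP => // /H.
  by [].
by [].
Qed.

Lemma vwE d k1 k2 w p : p \in Z1s k1 :|: Z2s k1 k2 ->
  vw k1 k2 (Ys d k1 (Xs d w) w) w p = w p.
Proof.
rewrite /vw inE => /orP [pZ1|->//].
case: ifP => // _.
rewrite /Ys drop_size_cat ?hXs // (nth_map p); last by rewrite index_mem mem_enum.
by rewrite nth_index // mem_enum.
Qed.

Lemma inCC k1 k2 n b : (k1, k2) \in Tb b -> (n, b) \in Z1s k1 :|: Z2s k1 k2.
Proof.
move=> H; rewrite !inE /=; case: (grp k1 \subset Tb b) => //=.
by rewrite H.
Qed.

Lemma hCs d w k1 k2 :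
  Ds d k1 k2 (Ys d k1 (Xs d w) w) w = [ffun b => w (d (k1, k2), b)].
Proof.
apply/ffunP => b; rewrite /Ds /Dec !ffunE.
set u := (k1, k2).
case: ifP => ub.
  by rewrite vwE // inCC.
set Q := u |: Tb b.
have QP : Q \in Pt1 by rewrite inE cardsU1 ub TbP.
have uQ : u \in Q by rewrite setU11.
rewrite /Ys nth_cat hXs [#|Pt1|]cardE index_mem mem_enum QP (nth_map Q); last by rewrite index_mem mem_enum.
rewrite nth_index ?mem_enum //.
rewrite (bigD1 u) //= {1}/Q setU1K ?ub // idxK.
set s1 := \big[addb/false]_(i in Q | i != u) _.
set s2 := \big[addb/false]_(u' in Tb b) _.
have -> : s1 = s2.
  rewrite /s1 /s2; apply: eq_big => u'.
    rewrite /Q in_setU1; case: eqP => [->|]; by rewrite ?ub ?eqxx ?andbF ?andbT.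
  move=> /andP [u'Q u'u].
  rewrite vwE //.
  have Hin : Q :\ u' \in Pt.
    have cQ : #|Q| = t.+1 by move: QP; rewrite inE => /eqP.
    rewrite inE; apply/eqP; have := cardsD1 u' Q; rewrite u'Q cQ /=.
    by rewrite add1n => -[->].
  apply: inCC; rewrite TbK // in_setD1 eq_sym u'u /=. done.
by rewrite -addbA addbb addbF.
Qed.
End Scheme.


Lemma cardU2 K1 K2 : #|{: 'I_K1 * 'I_K2}| = (K1 * K2)%N.
Proof. by rewrite card_prod !card_ord. Qed.

Lemma card_grp K1 K2 (k1 : 'I_K1) : #|grp K2 k1| = K2.
Proof.
have -> : grp K2 k1 = finset.setX [set k1] [set: 'I_K2].
  by apply/setP => -[a b]; rewrite !inE /= ?andbT ?andTb.
by rewrite cardsX cards1 cardsT card_ord mul1n.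
Qed.

Lemma card_Z1 K1 K2 t N (k1 : 'I_K1) : (K2 <= t)%N -> (t <= K1 * K2)%N ->
  #|Z1s K2 t N k1| = (N * 'C(K1 * K2 - K2, t - K2))%N.
Proof.
move=> h1 h2.
have -> : Z1s K2 t N k1 = finset.setX [set: 'I_N] [set b | grp K2 k1 \subset Tb b].
  by apply/setP => -[a b]; rewrite !inE /= ?andbT ?andTb.
rewrite cardsX cardsT card_ord; congr (_ * _)%N.
rewrite /Tb (card_enum_val (Pt K1 K2 t) (fun T => grp K2 k1 \subset T)).
have := @card_sup _ (grp K2 k1) t; rewrite card_grp cardU2 h1 h2 => /(_ isT) <-.
by apply: eq_card => T; rewrite !inE andbC.
Qed.

Lemma card_Z2 K1 K2 t N (k1 : 'I_K1) (k2 : 'I_K2) : (K2 <= t)%N -> (t <= K1 * K2)%N -> (0 < t)%N ->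
  (#|Z2s t N k1 k2| + N * 'C(K1 * K2 - K2, t - K2) = N * 'C(K1 * K2 - 1, t - 1))%N.
Proof.
move=> h1 h2 t0.
have -> : Z2s t N k1 k2 = finset.setX [set: 'I_N]
   [set b | ((k1, k2) \in Tb b) && ~~ (grp K2 k1 \subset Tb b)].
  by apply/setP => -[a b]; rewrite !inE /= ?andbT ?andTb.
rewrite -(@card_Z1 K1 K2 t N k1 h1 h2).
have -> : Z1s K2 t N k1 = finset.setX [set: 'I_N] [set b | grp K2 k1 \subset Tb b].
  by apply/setP => -[a b]; rewrite !inE /= ?andbT ?andTb.
rewrite !cardsX cardsT card_ord -mulnDr; congr (_ * _)%N.
rewrite /Tb (card_enum_val (Pt K1 K2 t) (fun T => grp K2 k1 \subset T)).
rewrite (card_enum_val (Pt K1 K2 t) (fun T => ((k1, k2) \in T) && ~~ (grp K2 k1 \subset T))).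
set A := [set x : {set _} in Pt K1 K2 t | (k1, k2) \in x].
have eA : #|A| = 'C(K1 * K2 - 1, t - 1).
  have := @card_sup _ [set (k1, k2)] t; rewrite cards1 cardU2 => /(_ ltac:(lia)) <-.
  by apply: eq_card => T; rewrite !inE finset.sub1set andbC.
rewrite -eA.
rewrite -(cardsID [set T : {set _} | grp K2 k1 \subset T] A) addnC.
congr (_ + _)%N; apply: eq_card => T; rewrite !inE.
all: case: (boolP (grp K2 k1 \subset T)) => H; rewrite ?andbT ?andbF //=.
have uT : (k1, k2) \in T by apply: (fintype.subsetP H); rewrite inE.
by rewrite uT andbT.
Qed.

Local Open Scope ring_scope.
Lemma achieve (R : realType) (K1 K2 t N : nat) (M1 M2 : R) :
  (0 < K1)%N -> (0 < K2)%N -> (0 < t)%N ->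
  (K2 < t)%N -> (t < K1 * K2)%N -> (K1 * K2 <= N)%N ->
  M1 / N%:R = ('C(K1 * K2 - K2, t - K2))%:R / ('C(K1 * K2, t))%:R ->
  M2 / N%:R = t%:R / (K1 * K2)%:R
              - ('C(K1 * K2 - K2, t - K2))%:R / ('C(K1 * K2, t))%:R ->
  achievable_load K1 K2 N M1 M2 (((K1 * K2)%:R - t%:R) / (t.+1)%:R).
Proof.
move=> K10 K20 t0 K2t tK KN HM1 HM2.
have N0 : (0 < N)%N by apply: leq_trans KN; rewrite muln_gt0 K10.
have cPt : #|Pt K1 K2 t| = 'C(K1 * K2, t).
  by rewrite /Pt card_draws cardU2.
have cPt1 : #|Pt1 K1 K2 t| = 'C(K1 * K2, t.+1).
  by rewrite /Pt1 card_draws cardU2.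
have Pt0 : (0 < #|Pt K1 K2 t|)%N by rewrite cPt bin_gt0 ltnW.
have [x0 x0P] := card_gt0P Pt0.
set C0 := 'C(K1 * K2, t).
set c1 := 'C(K1 * K2 - K2, t - K2).
have C0p : (0 < C0)%N by rewrite bin_gt0 ltnW.
have C0r : (C0%:R : R) != 0 by rewrite pnatr_eq0 -lt0n.
have Nr : (N%:R : R) != 0 by rewrite pnatr_eq0 -lt0n.
have Kr : ((K1 * K2)%:R : R) != 0 by rewrite pnatr_eq0 -lt0n muln_gt0 K10.
have eM1 : M1 = N%:R * c1%:R / C0%:R.
  by rewrite /c1 /C0 -mulrA -HM1; field.
have eM2 : M2 = N%:R * (t%:R / (K1 * K2)%:R - c1%:R / C0%:R).
  by rewrite /c1 /C0 -HM2; field.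
have bd : ((K1 * K2) * 'C(K1 * K2 - 1, t - 1) = t * C0)%N.
  have := mul_bin_diag (K1 * K2) (t - 1).
  have -> : (t - 1).+1 = t by lia.
  by move=> H; rewrite /C0 -H subn1.
exists #|Pt K1 K2 t|; split => //.
exists (@Z1s K1 K2 t N), (@Z2s K1 K2 t N), (fun _ => #|Pt1 K1 K2 t|),
  (@Xs K1 K2 t N x0 x0P), (@Ys K1 K2 t N), (@Ds K1 K2 t N x0 x0P).
split.
  move=> k1; rewrite card_Z1 ?(ltnW K2t) ?(ltnW tK) // cPt -/c1 -/C0 eM1 natrM.
  by rewrite mulrAC -mulrA divff // mulr1.
split.
  move=> k1 k2.
  have := @card_Z2 K1 K2 t N k1 k2 (ltnW K2t) (ltnW tK) t0.
  rewrite -/c1 => /(congr1 (fun n => n%:R : R)); rewrite natrD !natrM => E.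
  have -> : (#|Pt K1 K2 t|%:R : R) = C0%:R by rewrite cPt.
  rewrite eM2.
  have -> : (#|Z2s t N k1 k2|%:R : R) = N%:R * 'C(K1 * K2 - 1, t - 1)%:R - N%:R * c1%:R.
    by rewrite -E addrK.
  have bdr : ((K1 * K2)%:R * 'C(K1 * K2 - 1, t - 1)%:R = t%:R * C0%:R :> R).
    by rewrite -!natrM bd.
  have -> : ('C(K1 * K2 - 1, t - 1)%:R : R) = t%:R * C0%:R / (K1 * K2)%:R.
    by rewrite -bdr; field; rewrite !pnatr_eq0 -!lt0n K10 K20.
  rewrite le_eqVlt; apply/orP; left; apply/eqP; field; rewrite ?C0r ?pnatr_eq0 -?lt0n ?K10 ?K20 //=.
split; first exact: hXs.
split; first exact: hYs.
split; first exact: hDs.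
split; first exact: hCs.
have -> : (\max_(d : demand K1 K2 N) #|Pt1 K1 K2 t|)%N = #|Pt1 K1 K2 t|.
  apply/eqP; rewrite eqn_leq; apply/andP; split.
    by apply/bigmax_leqP.
  exact: (@leq_bigmax _ (fun _ => #|Pt1 K1 K2 t|) [ffun _ => Ordinal N0]).
rewrite cPt1 cPt.
have := mul_bin_left (K1 * K2) t.
move=> /(congr1 (fun n => n%:R : R)); rewrite !natrM natrB ?(ltnW tK) // => E.
have tr : (t.+1%:R : R) != 0 by rewrite pnatr_eq0.
rewrite natrM in E.
have C1r : ('C(K1 * K2, t)%:R : R) != 0 by rewrite pnatr_eq0 -lt0n bin_gt0 ltnW.
apply/eqP; rewrite eqr_div //; apply/eqP.
move: E; rewrite -!natr1; lra.
Qed.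

Local Open Scope ring_scope.

Lemma pw (R : realFieldType) (K t s : R) : 0 <= s -> 0 <= t -> 0 <= K ->
  s * (K + 1) / (s + 1) <= t * (K + 1) / (t + 1) + (K + 1) / (t + 1) ^+ 2 * (s - t).
Proof.
move=> s0 t0 K0.
have s1 : s + 1 != 0 by rewrite gt_eqF // ltr_wpDl.
have t1 : t + 1 != 0 by rewrite gt_eqF // ltr_wpDl.
rewrite -subr_ge0.
have -> : t * (K + 1) / (t + 1) + (K + 1) / (t + 1) ^+ 2 * (s - t) - s * (K + 1) / (s + 1)
   = (K + 1) * (s - t) ^+ 2 / ((s + 1) * (t + 1) ^+ 2).
  by field; rewrite s1 t1.
apply: divr_ge0; first by apply: mulr_ge0; [lra | exact: sqr_ge0].
apply: mulr_ge0; [lra | exact: sqr_ge0].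
Qed.

Lemma converse (R : realType) (K1 K2 t N : nat) (M1 M2 r : R) :
  (0 < N)%N -> (K1 * K2 <= N)%N ->
  (M1 + M2) * (K1 * K2)%:R = N%:R * t%:R ->
  achievable_load K1 K2 N M1 M2 r -> ((K1 * K2)%:R - t%:R) / (t.+1)%:R <= r.
Proof.
move=> N0 KN HM [B [B0 [Z1 [Z2 [L [X [Y [D [h1 [h2 [hX [hY [hD [hC ->]]]]]]]]]]]]]].
have Hn := conv_nat hX hY hD hC N0 KN.
set Lm := (\max_d L d)%N in Hn *.
set P := #|{perm ('I_K1 * 'I_K2)}| in Hn.
have P0 : (0 < P)%N by apply/card_gt0P; exists 1%g.
have cardU : #|{: 'I_K1 * 'I_K2}| = (K1 * K2)%N by rewrite card_prod !card_ord.
set K : R := (K1 * K2)%:R.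
set tt : R := t%:R.
have K0 : 0 <= K by rewrite /K ler0n.
have t0 : 0 <= tt by rewrite /tt ler0n.
have HT p : ((\sum_v \sum_(pi : {perm _}) (cntS (@rk K1 K2) pi (Sp Z1 Z2 p) v : nat))%N%:R : R)
    = P%:R * (#|Sp Z1 Z2 p|%:R * (K + 1) / (#|Sp Z1 Z2 p|%:R + 1)).
  have := cnt_sum (@rk_inj K1 K2) (Sp Z1 Z2 p).
  rewrite cardU => /(congr1 (fun n => n%:R : R)).
  rewrite !natrM !natrD => E.
  have s1 : (#|Sp Z1 Z2 p|%:R + 1 : R) != 0 by rewrite gt_eqF // ltr_wpDl.
  apply: (mulfI s1); rewrite E /K; field; exact: s1.
have HS : \sum_(p : 'I_N * 'I_B) (#|Sp Z1 Z2 p|%:R : R) <= N%:R * B%:R * tt.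
  have E : (\sum_p #|Sp Z1 Z2 p| = \sum_u #|CC Z1 Z2 u|)%N.
    under eq_bigr do rewrite card_sumS.
    rewrite exchange_big; apply: eq_bigr => u _; rewrite card_sumS; apply: eq_bigr => p _.
    by rewrite inE.
  rewrite -natr_sum E natr_sum.
  apply: (@le_trans _ _ (\sum_(u : 'I_K1 * 'I_K2) (M1 * B%:R + M2 * B%:R))).
    apply: ler_sum => u _.
    apply: (@le_trans _ _ ((#|Z1 u.1| + #|Z2 u.1 u.2|)%N%:R)).
      by rewrite ler_nat /CC cardsU leq_subr.
    by rewrite natrD; apply: lerD; [exact: h1|exact: h2].
  rewrite sumr_const cardU -[_ *+ (K1 * K2)]mulr_natr.
  have -> : (M1 * B%:R + M2 * B%:R) * (K1 * K2)%:R = ((M1 + M2) * (K1 * K2)%:R) * B%:R by ring.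
  by rewrite HM /tt mulrAC.
set S := \sum_(p : 'I_N * 'I_B) (#|Sp Z1 Z2 p|%:R : R) in HS.
set c0 := tt * (K + 1) / (tt + 1).
set a := (K + 1) / (tt + 1) ^+ 2.
have a0 : 0 <= a by rewrite /a divr_ge0 // ?sqr_ge0; lra.
have Q : \sum_(p : 'I_N * 'I_B) (P%:R * (#|Sp Z1 Z2 p|%:R * (K + 1) / (#|Sp Z1 Z2 p|%:R + 1)))
   <= P%:R * (c0 *+ (N * B) + a * (S - tt *+ (N * B))).
  rewrite -mulr_sumr ler_pM2l ?ltr0n //.
  apply: (@le_trans _ _ (\sum_(p : 'I_N * 'I_B) (c0 + a * (#|Sp Z1 Z2 p|%:R - tt)))).
    apply: ler_sum => p _; apply: pw => //; exact: ler0n.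
  rewrite big_split /= sumr_const card_prod !card_ord -mulr_sumr sumrB sumr_const card_prod !card_ord.
  done.
move: Hn; rewrite -(ler_nat R) natrD natr_sum.
rewrite (eq_bigr _ (fun p _ => HT p)) => Hn.
have {}Hn := le_trans Hn (lerD (lexx _) Q).
rewrite -[c0 *+ _]mulr_natr -[tt *+ _]mulr_natr in Hn.
have e1 : (P * (N * (K1 * K2 * B)))%:R = P%:R * (N%:R * (K * B%:R)) :> R by rewrite /K !natrM.
have e2 : (P * (N * Lm))%:R = P%:R * (N%:R * Lm%:R) :> R by rewrite !natrM.
have e3 : (N * B)%:R = N%:R * B%:R :> R by rewrite natrM.
rewrite e1 e2 e3 in Hn.
have h3 : a * (S - tt * (N%:R * B%:R)) <= 0.
  apply: mulr_ge0_le0 => //; lra.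
have Pp : 0 < (P%:R : R) by rewrite ltr0n.
have Np : 0 < (N%:R : R) by rewrite ltr0n.
have Bp : 0 < (B%:R : R) by rewrite ltr0n.
have H4 : N%:R * (K * B%:R) <= N%:R * (Lm%:R + c0 * B%:R).
  rewrite -(ler_pM2l Pp); apply: le_trans Hn _.
  rewrite -mulrDr ler_pM2l //. 
  have -> : N%:R * (Lm%:R + c0 * B%:R) = N%:R * Lm%:R + c0 * (N%:R * B%:R) by ring.
  lra.
rewrite ler_pM2l // in H4.
have -> : (K - tt) / t.+1%:R = K - c0.
  have tp : (t%:R + 1 : R) != 0 by rewrite natr1 pnatr_eq0.
  rewrite /c0 -natr1 /tt; field; exact: tp.
rewrite ler_pdivlMr //; lra.
Qed.

Unset Implicit Arguments.

Theorem corollary1 (R : realType) (K1 K2 t N : nat) (M1 M2 : R) :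
  (0 < K1)%N -> (0 < K2)%N -> (0 < t)%N ->
  (K2 < t)%N -> (t < K1 * K2)%N -> (K1 * K2 <= N)%N ->
  M1 / N%:R = ('C(K1 * K2 - K2, t - K2))%:R / ('C(K1 * K2, t))%:R ->
  M2 / N%:R = t%:R / (K1 * K2)%:R
              - ('C(K1 * K2 - K2, t - K2))%:R / ('C(K1 * K2, t))%:R ->
  R1_star K1 K2 N M1 M2
    = (K1 * K2)%:R * (1 - (M1 + M2) / N%:R)
        / ((K1 * K2)%:R * ((M1 + M2) / N%:R) + 1)
  /\ (K1 * K2)%:R * (1 - (M1 + M2) / N%:R)
        / ((K1 * K2)%:R * ((M1 + M2) / N%:R) + 1)
     = ((K1 * K2)%:R - t%:R) / (t.+1)%:R.
Proof.
move=> K10 K20 t0 K2t tK KN HM1 HM2.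
have N0 : (0 < N)%N by apply: leq_trans KN; rewrite muln_gt0 K10.
have Nr : (N%:R : R) != 0 by rewrite pnatr_eq0 -lt0n.
have Kr : ((K1 * K2)%:R : R) != 0 by rewrite pnatr_eq0 -lt0n muln_gt0 K10.
have HS : (M1 + M2) / N%:R = t%:R / (K1 * K2)%:R.
  by rewrite mulrDl HM1 HM2 addrC subrK.
have E2 : (K1 * K2)%:R * (1 - (M1 + M2) / N%:R)
        / ((K1 * K2)%:R * ((M1 + M2) / N%:R) + 1)
     = ((K1 * K2)%:R - t%:R) / (t.+1)%:R :> R.
  rewrite HS -natr1; field.
  by rewrite natr1 !pnatr_eq0 -!lt0n K10 K20.
split => //.
rewrite E2.
have HM : (M1 + M2) * (K1 * K2)%:R = N%:R * t%:R.
  have -> : M1 + M2 = (M1 + M2) / N%:R * N%:R by field.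
  rewrite HS; field; by rewrite !pnatr_eq0 -!lt0n K10 K20.
set v := ((K1 * K2)%:R - t%:R) / (t.+1)%:R.
have vin : achievable_load K1 K2 N M1 M2 v by exact: achieve.
have lb : lbound [set r | achievable_load K1 K2 N M1 M2 r] v.
  by move=> r /= Hr; exact: (converse N0 KN HM Hr).
rewrite /R1_star; apply/eqP; rewrite eq_le; apply/andP; split.
  by apply: (ge_inf (ex_intro _ v lb)).
by apply: lb_le_inf => //; exists v.
Qed.
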